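(* Let $\{\theta_m\}$ satisfy $\theta_1\ge\theta_2\ge\cdots\ge0$, $\theta_m\to0$; $\mathcal B=\mathcal B(\{\theta_m\})$; $b_1,b_2>0$. There exists $C_3>0$, depending only on $b_1,b_2$ (besides $N$ and $\{\theta_m\}$), such that for all $m\in\mathbb N$ with $\theta_m\le1$ and every $g\in V$ satisfying (H), writing $g_m=E_mg$, one has $\mathscr L_{g_m}(\mathcal B)\subset\mathcal B$ and $\|\mathscr L_g-\mathscr L_{g_m}\|_{\mathcal B\to\mathcal B}\le C_3\theta_m$.
   Context: $\Sigma_{\mathbf A}^+$ is the one-sided Markov shift of an $N\times N$ zero-one aperiodic matrix $\mathbf A$, $\sigma_{\mathbf A}$ the shift. $\mathrm{var}_k(\phi)=\sup\{|\phi(\omega)-\phi(\omega')|:\omega_j=\omega'_j,\ 0\le j\le k-1\}$; $V=\{\phi:\mathrm{var}_k(\phi)^{1/k}\to0\}$. $(\mathscr L_g\phi)(\omega)=\sum_{\sigma_{\mathbf A}\omega'=\omega}e^{g(\omega')}\phi(\omega')$. $\mathcal B(\{\theta_m\})=\{\phi\in V:\exists C\ge0,\ \mathrm{var}_k(\phi)\le C\theta_{k+1}^k\ \forall k\ge0\}$ with norm $\|\phi\|_\infty+\inf C$. Fix a Borel probability $\mu$ charging all nonempty open sets; $(E_m\phi)(\omega)=\mu([\omega|m])^{-1}\int_{[\omega|m]}\phi\,d\mu$, $[\omega|m]=\{\xi:\xi_j=\omega_j,0\le j\le m-1\}$. Condition (H) on $g\in V$: $e^{\max\mathrm{Re}\,g}\le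 b_1$ and $\mathrm{var}_k(g)\le b_2\theta_k^k$ for all $k\in\mathbb N$. *)

(* Defs.v *)
From HB Require Import structures.
From mathcomp Require Import all_boot all_order all_algebra.
From mathcomp Require Import all_classical all_reals all_analysis.
From mathcomp Require Import complex.
Set Implicit Arguments. Unset Strict Implicit. Unset Printing Implicit Defensive.
Import Order.TTheory GRing.Theory Num.Theory.
Import numFieldNormedType.Exports.
Local Open Scope classical_set_scope.
Local Open Scope ring_scope.

Definition cmod (R : realType) (z : R[i]) : R :=
  Num.sqrt (complex.Re z ^+ 2 + complex.Im z ^+ 2).

Definition cexp (R : realType) (z : R[i]) : R[i] :=
  Complex (expR (complex.Re z) * cos (complex.Im z)) (expR (complex.Re z) * sin (complex.Im z)).

Definition zero_one (N : nat) (A : 'M[nat]_N) : Prop :=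
  forall i j, A i j = 0%N \/ A i j = 1%N.

Definition mxpow (N : nat) (A : 'M[nat]_N) (M : nat) : 'M[nat]_N :=
  iter M (mulmx A) 1%:M.

Definition aperiodic (N : nat) (A : 'M[nat]_N) : Prop :=
  exists M : nat, (0 < M)%N /\ forall i j, (0 < mxpow A M i j)%N.

Definition admissible (N : nat) (A : 'M[nat]_N) (w : nat -> 'I_N) : Prop :=
  forall j, A (w j) (w j.+1) = 1%N.

Definition Sigma (N : nat) (A : 'M[nat]_N) := {w : nat -> 'I_N | admissible A w}.
HB.instance Definition _ N A := gen_eqMixin (@Sigma N A).
HB.instance Definition _ N A := gen_choiceMixin (@Sigma N A).

Definition sshift (N : nat) (A : 'M[nat]_N) (w : Sigma A) : Sigma A :=
  exist (admissible A) (fun j => proj1_sig w j.+1) (fun j => proj2_sig w j.+1).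

Definition cyl (N : nat) (A : 'M[nat]_N) (w : Sigma A) (m : nat) : set (Sigma A) :=
  [set x | forall j, (j < m)%N -> proj1_sig x j = proj1_sig w j].

(* open sets of the (product) topology of Sigma_A^+ *)
Definition isOpenS (N : nat) (A : 'M[nat]_N) (U : set (Sigma A)) : Prop :=
  forall w, U w -> exists m, cyl w m `<=` U.

(* a pointed copy of Sigma_A^+ (the base point is only needed by the
   measure-theory library; Sigma_A^+ is nonempty as it carries a probability) *)
Definition SigmaP (N : nat) (A : 'M[nat]_N) (w0 : Sigma A) := Sigma A.
HB.instance Definition _ N A w0 := Choice.on (@SigmaP N A w0).
HB.instance Definition _ N A w0 := isPointed.Build (@SigmaP N A w0) w0.

Definition openSets (N : nat) (A : 'M[nat]_N) (w0 : Sigma A) : set (set (SigmaP w0)) :=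
  [set U | isOpenS U].
Arguments openSets {N A} w0.

Definition BorelSigma (N : nat) (A : 'M[nat]_N) (w0 : Sigma A) :=
  g_sigma_algebraType (openSets w0).

Section FunSpaces.
Context (R : realType) (N : nat) (A : 'M[nat]_N).
Local Notation S := (Sigma A).

Definition var (k : nat) (phi : S -> R[i]) : \bar R :=
  ereal_sup [set e | exists x y : S,
     (forall j, (j < k)%N -> proj1_sig x j = proj1_sig y j) /\
     e = (cmod (phi x - phi y))%:E].

Definition inV (phi : S -> R[i]) : Prop :=
  (exists K, forall k, (K <= k)%N -> (var k phi < +oo)%E) /\
  ((fun k : nat => powR (fine (var k phi)) (k%:R^-1)) @ \oo --> (0 : R)).

Definition inB (theta : nat -> R) (phi : S -> R[i]) : Prop :=
  inV phi /\ exists C : R, 0 <= C /\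
    forall k, (var k phi <= (C * theta k.+1 ^+ k)%:E)%E.

Definition normB (theta : nat -> R) (phi : S -> R[i]) : \bar R :=
  (ereal_sup [set (cmod (phi x))%:E | x in [set: S]] +
   ereal_inf (EFin @` [set C : R | (0 <= C)%R /\
      forall k, (var k phi <= (C * theta k.+1 ^+ k)%:E)%E]))%E.

Definition transfer (g phi : S -> R[i]) (w : S) : R[i] :=
  \sum_(w' \in @sshift N A @^-1` [set w]) (cexp (g w') * phi w').

End FunSpaces.

Definition Cintegral (R : realType) (N : nat) (A : 'M[nat]_N) (w0 : Sigma A)
  (mu : probability (BorelSigma w0) R) (D : set (Sigma A)) (f : Sigma A -> R[i])
  : R[i] :=
  Complex (Rintegral mu D (fun x => complex.Re (f x))) (Rintegral mu D (fun x => complex.Im (f x))).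

Definition Em (R : realType) (N : nat) (A : 'M[nat]_N) (w0 : Sigma A)
  (mu : probability (BorelSigma w0) R) (m : nat) (phi : Sigma A -> R[i])
  (w : Sigma A) : R[i] :=
  Complex ((fine (mu (cyl w m)))^-1) 0 * Cintegral mu (cyl w m) phi.

Definition charges_open (R : realType) (N : nat) (A : 'M[nat]_N) (w0 : Sigma A)
  (mu : probability (BorelSigma w0) R) : Prop :=
  forall U : set (Sigma A), isOpenS U -> U !=set0 -> (0 < mu U)%E.

Definition condH (R : realType) (N : nat) (A : 'M[nat]_N)
  (b1 b2 : R) (theta : nat -> R) (g : Sigma A -> R[i]) : Prop :=
  (forall x, expR (complex.Re (g x)) <= b1) /\
  (forall k, (1 <= k)%N -> (var k g <= (b2 * theta k ^+ k)%:E)%E).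

(* Main.v *)
Require Import Defs.
From HB Require Import structures.
From mathcomp Require Import all_boot all_order all_algebra.
From mathcomp Require Import all_classical all_reals all_analysis.
From mathcomp Require Import complex.
From mathcomp Require Import ring lra.
Import Order.TTheory GRing.Theory Num.Theory.
Import numFieldNormedType.Exports.
Local Open Scope classical_set_scope.
Local Open Scope ring_scope.
Local Open Scope complex_scope.
Section CA.
Context {R : realType}.
Implicit Types (z w : R[i]) (a b x y : R).

Lemma cmodE z : (cmod z)%:C = `|z|.
Proof. by rewrite normc_def. Qed.

Lemma cmod_ge0 z : 0 <= cmod z.
Proof. exact: sqrtr_ge0. Qed.

Lemma cmodD z w : cmod (z + w) <= cmod z + cmod w.
Proof. by rewrite -lecR rmorphD /= !cmodE ler_normD. Qed.

Lemma cmodM z w : cmod (z * w) = cmod z * cmod w.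
Proof. by apply: complexI; rewrite rmorphM /= !cmodE normrM. Qed.

Lemma cmodN z : cmod (- z) = cmod z.
Proof. by apply: complexI; rewrite !cmodE normrN. Qed.

Lemma cmodB z w : cmod (z - w) = cmod (w - z).
Proof. by rewrite -cmodN opprB. Qed.

Lemma cmod_sum (I : Type) (r : seq I) (P : pred I) (F : I -> R[i]) :
  cmod (\sum_(i <- r | P i) F i) <= \sum_(i <- r | P i) cmod (F i).
Proof.
rewrite -lecR cmodE rmorph_sum /=.
under [X in _ <= X]eq_bigr do rewrite cmodE.
exact: ler_norm_sum.
Qed.

Lemma cmod_real a : cmod (Complex a 0) = `|a|.
Proof. by rewrite /cmod /= expr0n /= addr0 sqrtr_sqr. Qed.

Lemma cmod_imag b : cmod (Complex 0 b) = `|b|.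
Proof. by rewrite /cmod /= expr0n /= add0r sqrtr_sqr. Qed.

Lemma cmod_ReIm z : cmod z <= `|complex.Re z| + `|complex.Im z|.
Proof.
case: z => a b /=.
have -> : Complex a b = Complex a 0 + Complex 0 b by apply/eqP; rewrite eq_complex /= addr0 add0r !eqxx.
by rewrite -cmod_real -cmod_imag cmodD.
Qed.

Lemma Re_le_cmod z : `|complex.Re z| <= cmod z.
Proof.
case: z => a b; rewrite /cmod /= -sqrtr_sqr ler_sqrt ?addr_ge0 ?sqr_ge0 //.
by rewrite lerDl sqr_ge0.
Qed.

Lemma Im_le_cmod z : `|complex.Im z| <= cmod z.
Proof.
case: z => a b; rewrite /cmod /= -sqrtr_sqr ler_sqrt ?addr_ge0 ?sqr_ge0 //.
by rewrite lerDr sqr_ge0.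
Qed.

Lemma cmod_cexp z : cmod (cexp z) = expR (complex.Re z).
Proof.
rewrite /cmod /cexp /= !exprMn -mulrDr addrC sin2cos2 subrK mulr1.
by rewrite sqrtr_sqr ger0_norm // expR_ge0.
Qed.

Lemma cexpD z w : cexp (z + w) = cexp z * cexp w.
Proof.
case: z => a b; case: w => c d.
rewrite /cexp /=; apply/eqP; rewrite eq_complex /= expRD cosD sinD.
apply/andP; split; apply/eqP; ring.
Qed.

Lemma ReB z w : complex.Re (z - w) = complex.Re z - complex.Re w.
Proof. by case: z; case: w. Qed.

Lemma ImB z w : complex.Im (z - w) = complex.Im z - complex.Im w.
Proof. by case: z; case: w. Qed.

Lemma cmod0 : cmod (0 : R[i]) = 0.
Proof. by rewrite /cmod /= expr0n /= addr0 sqrtr0. Qed.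

End CA.
Section CA2.
Context {R : realType}.
Implicit Types (z w : R[i]) (a b x y : R).

Lemma sin_lip x y : `|sin x - sin y| <= `|x - y|.
Proof.
wlog xy : x y / y <= x.
  move=> H; case: (leP y x) => [/H//|/ltW /H]; by rewrite distrC [`|y - x|]distrC.
have [c _ ->] := @MVT_segment R sin cos y x xy (fun t _ => is_derive_sin t)
   (continuous_subspaceT (@continuous_sin R)).
by rewrite normrM ler_piMl // cos_max.
Qed.

Lemma cos_lip x y : `|cos x - cos y| <= `|x - y|.
Proof.
wlog xy : x y / y <= x.
  move=> H; case: (leP y x) => [/H//|/ltW /H]; by rewrite distrC [`|y - x|]distrC.
have [c _ ->] := @MVT_segment R cos (fun t => - sin t) y x xy (fun t _ => is_derive_cos t)
   (continuous_subspaceT (@continuous_cos R)).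
by rewrite normrM normrN ler_piMl // sin_max.
Qed.

Lemma expR_sub1 x : x <= 1/2 -> `|expR x - 1| <= 2 * `|x|.
Proof.
move=> x2; have e0 := expR_ge1Dx x.
case: (leP 0 x) => x0.
  have h := expR_ge1Dx (- x).
  rewrite expRN in h.
  have ex : 0 < expR x := expR_gt0 x.
  have h2 : expR x * (1 - x) <= 1.
    by rewrite -[X in _ <= X](mulfV (lt0r_neq0 ex)) ler_pM2l // -?(addrC (-x)) // addrC.
  rewrite ger0_norm ?subr_ge0 ?(le_trans _ e0) ?lerDl // ger0_norm //.
  have : expR x <= 2 by nra.
  nra.
rewrite ler0_norm ?subr_le0; last by rewrite -expR0 ler_expR ltW.
rewrite ltr0_norm //; lra.
Qed.

Lemma cexp_sub1 z : cmod z <= 1/2 -> cmod (cexp z - 1) <= 6 * cmod z.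
Proof.
move=> hz; case: z hz => a b hz.
have ha := Re_le_cmod (Complex a b); rewrite /= in ha.
have hb := Im_le_cmod (Complex a b); rewrite /= in hb.
set c := cmod _ in ha hb hz *.
have a2 : a <= 1/2 by move: ha; rewrite ler_norml => /andP[_ h]; lra.
have ea := @expR_sub1 a a2.
have e2 : expR a <= 2.
  move: ea; rewrite ler_norml => /andP[_ h]; have : `|a| <= 1/2 by lra. lra.
have ep := expR_ge0 a.
have hs : `|sin b| <= `|b| by have := sin_lip b 0; rewrite sin0 !subr0.
have hc : `|cos b - 1| <= `|b| by have := cos_lip b 0; rewrite cos0 !subr0.
apply: le_trans (cmod_ReIm _) _.
rewrite /cexp /= subr0.
have -> : expR a * cos b - 1 = expR a * (cos b - 1) + (expR a - 1) by ring.
apply: le_trans (lerD (ler_normD _ _) (lexx _)) _.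
rewrite !normrM (ger0_norm ep).
have h1 : expR a * `|cos b - 1| <= 2 * `|b|.
  by apply: le_trans (ler_wpM2l ep hc) _; apply: ler_wpM2r.
have h2 : expR a * `|sin b| <= 2 * `|b|.
  by apply: le_trans (ler_wpM2l ep hs) _; apply: ler_wpM2r.
lra.
Qed.

Lemma cexp_lip {z w B} : expR (complex.Re z) <= B -> expR (complex.Re w) <= B ->
  cmod (cexp z - cexp w) <= 6 * B * cmod (z - w).
Proof.
move=> hz hw.
have B0 : 0 <= B by apply: le_trans hw; exact: expR_ge0.
have c0 := cmod_ge0 (z - w).
case: (leP (cmod (z - w)) (1/2)) => h.
  have -> : cexp z - cexp w = cexp w * (cexp (z - w) - 1).
    by rewrite mulrBr mulr1 -cexpD (addrC w) subrK.
  rewrite cmodM cmod_cexp.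
  apply: le_trans (ler_wpM2l (expR_ge0 _) (@cexp_sub1 _ h)) _.
  have := expR_ge0 (complex.Re w); nra.
apply: le_trans (cmodD _ _) _; rewrite cmodN !cmod_cexp.
nra.
Qed.
End CA2.
Section SB.
Context {R : realType} {N : nat} {A : 'M[nat]_N}.
Local Notation S := (Sigma A).

Definition agree k (x y : S) := forall j, (j < k)%N -> proj1_sig x j = proj1_sig y j.

Lemma agree_mono {j k x y} : (j <= k)%N -> agree k x y -> agree j x y.
Proof. by move=> jk h i ij; apply: h; apply: leq_trans jk. Qed.

Lemma agree_sym k x y : agree k x y -> agree k y x.
Proof. by move=> h i ij; rewrite h. Qed.

Lemma var_le k (f : S -> R[i]) (e : R) :
  (forall x y, agree k x y -> cmod (f x - f y) <= e) -> (var k f <= e%:E)%E.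
Proof. by move=> H; apply: ge_ereal_sup => _ [x [y [hxy ->]]]; rewrite lee_fin; exact: H. Qed.

Lemma var_pt {k} {f : S -> R[i]} {e : R} {x y} :
  (var k f <= e%:E)%E -> agree k x y -> cmod (f x - f y) <= e.
Proof.
move=> H hxy; rewrite -lee_fin; apply: le_trans H; apply: ereal_sup_ubound.
by exists x, y; split.
Qed.

Lemma sig_eq (x y : S) : proj1_sig x = proj1_sig y -> x = y.
Proof.
case: x => x hx; case: y => y hy /= e; subst y; congr exist.
exact: Prop_irrelevance.
Qed.

Definition consf (a : 'I_N) (x : S) : nat -> 'I_N :=
  fun j => if j is j'.+1 then proj1_sig x j' else a.

Lemma consf_adm a x : A a (proj1_sig x 0) = 1%N -> admissible A (consf a x).
Proof. by move=> h [|j] /=; [exact: h | exact: (proj2_sig x j)]. Qed.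

Definition consS a x : S :=
  match pselect (admissible A (consf a x)) with
  | left H => exist _ _ H | right _ => x end.

Lemma consS_val a x : A a (proj1_sig x 0) = 1%N -> proj1_sig (consS a x) = consf a x.
Proof. by move=> h; rewrite /consS; case: pselect => // -[]; exact: consf_adm. Qed.

Lemma preimage_shift w : sshift (A:=A) @^-1` [set w] =
  (consS ^~ w) @` [set a | A a (proj1_sig w 0) = 1%N].
Proof.
apply/seteqP; split => y /=.
  move=> hy; exists (proj1_sig y 0).
    by rewrite -hy /=; exact: (proj2_sig y 0).
  rewrite -hy; apply: sig_eq; rewrite consS_val /=; last exact: (proj2_sig y 0).
  by apply: funext => -[|j].
move=> [a ha <-]; apply: sig_eq; rewrite /= consS_val //.
Qed.

Lemma consS_inj w : set_inj [set a | A a (proj1_sig w 0) = 1%N] (consS ^~ w).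
Proof.
move=> a b /set_mem ha /set_mem hb e.
have := congr1 (fun x => proj1_sig x 0) e.
by rewrite /= !consS_val.
Qed.

Definition TU (u phi : S -> R[i]) (w : S) : R[i] :=
  \sum_(a < N | A a (proj1_sig w 0) == 1%N) u (consS a w) * phi (consS a w).

Lemma transferE (g phi : S -> R[i]) w :
  transfer g phi w = TU (fun x => cexp (g x)) phi w.
Proof.
rewrite /transfer preimage_shift fsbig_image; last exact: consS_inj.
rewrite /TU [RHS]bigfs; last 2 first.
  exact: index_enum_uniq.
  by move=> i _; rewrite mem_index_enum.
apply: eq_fsbigl; apply/seteqP; split => i /=; rewrite /mkset.
  by move=> h; rewrite unfold_in /= h.
by rewrite unfold_in /= => /eqP.
Qed.

Lemma TU_sub u1 u2 phi w : TU u1 phi w - TU u2 phi w = TU (fun x => u1 x - u2 x) phi w.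
Proof. by rewrite /TU -sumrB; apply: eq_bigr => a _; rewrite mulrBl. Qed.

Lemma sum_filter_le (P : pred 'I_N) (F : 'I_N -> R) c :
  0 <= c -> (forall a, P a -> F a <= c) -> \sum_(a < N | P a) F a <= N%:R * c.
Proof.
move=> c0 H.
have <- : \sum_(a < N) c = N%:R * c by rewrite sumr_const card_ord mulr_natl.
rewrite [X in _ <= X](bigID P) /= -[X in X <= _]addr0; apply: lerD.
  by apply: ler_sum => a /H.
by apply: sumr_ge0.
Qed.

Lemma TU_sup u phi U M : 0 <= U -> 0 <= M ->
  (forall x, cmod (u x) <= U) -> (forall x, cmod (phi x) <= M) ->
  forall w, cmod (TU u phi w) <= N%:R * (U * M).
Proof.
move=> U0 M0 hu hp w; rewrite /TU; apply: le_trans (cmod_sum _ _ _ _) _.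
apply: sum_filter_le; first exact: mulr_ge0.
by move=> a _; rewrite cmodM; apply: ler_pM => //; exact: cmod_ge0.
Qed.

Lemma TU_var u phi k U M Wk Pk : (1 <= k)%N -> 0 <= U -> 0 <= M -> 0 <= Wk -> 0 <= Pk ->
  (forall x, cmod (u x) <= U) -> (forall x, cmod (phi x) <= M) ->
  (forall x y, agree k.+1 x y -> cmod (u x - u y) <= Wk) ->
  (forall x y, agree k.+1 x y -> cmod (phi x - phi y) <= Pk) ->
  forall x y, agree k x y -> cmod (TU u phi x - TU u phi y) <= N%:R * (Wk * M + U * Pk).
Proof.
move=> k1 U0 M0 W0 P0 hu hp hW hP x y hxy.
have e0 : proj1_sig y 0 = proj1_sig x 0 by rewrite hxy.
rewrite /TU e0 -sumrB; apply: le_trans (cmod_sum _ _ _ _) _.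
apply: sum_filter_le; first by apply: addr_ge0; apply: mulr_ge0.
move=> a /eqP ha.
have hag : agree k.+1 (consS a x) (consS a y).
  move=> [|j] hj; rewrite consS_val // consS_val ?e0 //=.
  by apply: hxy.
have -> : u (consS a x) * phi (consS a x) - u (consS a y) * phi (consS a y) =
  (u (consS a x) - u (consS a y)) * phi (consS a x) +
   u (consS a y) * (phi (consS a x) - phi (consS a y)) by ring.
apply: le_trans (cmodD _ _) _; rewrite !cmodM; apply: lerD.
  by apply: ler_pM => //; [exact: cmod_ge0|exact: cmod_ge0|exact: hW].
by apply: ler_pM => //; [exact: cmod_ge0|exact: cmod_ge0|exact: hP].
Qed.

End SB.
Section SC.
Context {R : realType} {N : nat} {A : 'M[nat]_N} (theta : nat -> R).
Hypothesis theta_ge0 : forall m, (1 <= m)%N -> 0 <= theta m.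
Hypothesis theta_cvg0 : theta @ \oo --> (0 : R).
Local Notation S := (Sigma A).

Definition Bbound (f : S -> R[i]) (M C : R) :=
  (forall x, cmod (f x) <= M) /\
  (forall k x y, agree k x y -> cmod (f x - f y) <= C * theta k.+1 ^+ k).

Lemma fine_le_ge0 (e : \bar R) c : (e <= c%:E)%E -> 0 <= c -> fine e <= c.
Proof. by case: e => [r| |] //=; rewrite lee_fin. Qed.

Lemma fine_var_ge0 k (f : S -> R[i]) : 0 <= fine (var k f).
Proof.
case: (pselect (exists x : S, True)) => [[x _]|nx].
  have h : ((0:R)%:E <= var k f)%E.
    apply: ereal_sup_ubound; exists x, x; split => //.
    by rewrite subrr /cmod /= expr0n /= addr0 sqrtr0.
  by case: (var k f) h => [r| |] //=; rewrite lee_fin.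
have -> : var k f = -oo%E.
  rewrite /var; apply/ereal_sup_ninfty => e [x _].
  by exfalso; apply: nx; exists x.
by [].
Qed.

Lemma Bbound_inB f M C : 0 <= C -> Bbound f M C -> inB theta f.
Proof.
move=> C0 [hM hC].
have vk k : (var k f <= (C * theta k.+1 ^+ k)%:E)%E by apply: var_le => x y; exact: hC.
have thk k : 0 <= theta k.+1 ^+ k by apply: exprn_ge0; exact: theta_ge0.
split; last by exists C; split.
split.
  by exists 0%N => k _; apply: le_lt_trans (vk k) _; exact: ltey.
set c1 := C + 1.
have c11 : 1 <= c1 by rewrite /c1 lerDr.
have c10 : 0 <= c1 by apply: le_trans c11.
apply: (@squeeze_cvgr _ _ _ _ (fun=> 0) (fun k => c1 * theta k.+1)).
- exists 1%N => // k /= hk.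
  rewrite powR_ge0 /=.
  have hv : fine (var k f) <= (c1 * theta k.+1) ^+ k.
    apply: le_trans (fine_le_ge0 _ _ (vk k) (mulr_ge0 C0 (thk k))) _.
    rewrite exprMn; apply: ler_wpM2r => //.
    apply: le_trans (_ : c1 <= _); first by rewrite /c1 lerDl.
    by rewrite -[X in X <= _]expr1; exact: ler_weXn2l.
  have th0 : 0 <= c1 * theta k.+1 by apply: mulr_ge0 => //; exact: theta_ge0.
  apply: le_trans (ge0_ler_powR _ _ _ hv) _.
  - by rewrite invr_ge0.
  - by rewrite nnegrE fine_var_ge0.
  - by rewrite nnegrE exprn_ge0.
  rewrite -powR_mulrn // -powRrM mulfV ?powRr1 //.
  by rewrite pnatr_eq0 -lt0n.
- exact: cvg_cst.
- rewrite -[0](mulr0 c1); apply: cvgMl_tmp.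
  by rewrite (cvg_shiftS theta).
Qed.

Lemma normB_le f M C : 0 <= C -> Bbound f M C -> (normB theta f <= (M + C)%:E)%E.
Proof.
move=> C0 [hM hC]; rewrite /normB EFinD; apply: leeD.
  by apply: ge_ereal_sup => _ [x _ <-]; rewrite lee_fin.
apply: ereal_inf_lbound; exists C => //; split => // k.
by apply: var_le => x y; exact: hC.
Qed.

End SC.
Section SD.
Context {R : realType}.

Lemma int_mono d (T : measurableType d) (mu : {measure set T -> \bar R}) (D : set T)
  (f1 f2 : T -> \bar R) : (forall x, D x -> (f1 x <= f2 x)%E) ->
  (integral mu D f1 <= integral mu D f2)%E.
Proof.
move=> H; rewrite /integral; apply: leeB.
  apply: ge_ereal_sup => _ [h hh <-]; apply: ereal_sup_ubound; exists h => //= x.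
  apply: le_trans (hh x) _; rewrite !funeposE; apply: le_max2 => //.
  by rewrite /patch; case: ifP => // /set_mem /H.
apply: ge_ereal_sup => _ [h hh <-]; apply: ereal_sup_ubound; exists h => //= x.
apply: le_trans (hh x) _; rewrite !funenegE; apply: le_max2 => //.
by rewrite /patch; case: ifP => // /set_mem /H; rewrite leeN2.
Qed.

Lemma avg_bound d (T : measurableType d) (mu : {measure set T -> \bar R}) (D : set T)
  (f : T -> R) (c e m : R) : measurable D -> mu D = m%:E -> 0 < m ->
  (forall x, D x -> `|f x - c| <= e) ->
  `|Rintegral mu D f / m - c| <= e.
Proof.
move=> mD muD m0 H.
have lo : (((c - e) * m)%:E <= integral mu D (fun x => (f x)%:E))%E.
  rewrite EFinM -muD -integral_cst //; apply: int_mono => x /H.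
  by rewrite lee_fin ler_distl => /andP[h _]; lra.
have hi : (integral mu D (fun x => (f x)%:E) <= ((c + e) * m)%:E)%E.
  rewrite EFinM -muD -integral_cst //; apply: int_mono => x /H.
  by rewrite lee_fin ler_distl => /andP[_ h]; lra.
rewrite /Rintegral.
move: lo hi; case: (integral _ _ _) => [r| |] //= lo hi.
rewrite lee_fin in lo hi.
rewrite ler_distl; apply/andP; split.
  by rewrite ler_pdivlMr //.
by rewrite ler_pdivrMr //.
Qed.

End SD.
Section SE.
Context {R : realType} {N : nat} {A : 'M[nat]_N} (w0 : Sigma A)
  (mu : probability (BorelSigma w0) R).
Hypothesis hmu : charges_open mu.
Local Notation S := (Sigma A).

Lemma cyl_open (w : S) m : isOpenS (cyl w m).
Proof. by move=> x hx; exists m => y hy j hj; rewrite hy // hx. Qed.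

Lemma cyl_meas (w : S) m : measurable (cyl w m : set (BorelSigma w0)).
Proof. by apply: sub_sigma_algebra; exact: cyl_open. Qed.

Lemma cyl_mu (w : S) m : exists mm : R, mu (cyl w m) = mm%:E /\ 0 < mm.
Proof.
have h1 : (mu (cyl w m) <= 1)%E by apply: probability_le1; exact: cyl_meas.
have h0 : (0 < mu (cyl w m))%E by apply: hmu; [exact: cyl_open | exists w].
move: h0 h1; case: (mu _) => [r| |] //= h0 _.
by exists r; split => //; rewrite -lte_fin.
Qed.

Lemma Em_bound (g : S -> R[i]) m w (c : R[i]) (e : R) :
  (forall x, cyl w m x -> cmod (g x - c) <= e) ->
  cmod (Em mu m g w - c) <= 2 * e.
Proof.
move=> H; have [mm [hm m0]] := cyl_mu w m.
rewrite /Em /Cintegral hm /=.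
set I1 := Rintegral _ _ _; set I2 := Rintegral _ _ _.
have -> : Complex mm^-1 0 * Complex I1 I2 = Complex (I1 / mm) (I2 / mm).
  apply/eqP; rewrite eq_complex /=; apply/andP; split; apply/eqP.
    by rewrite mul0r subr0 mulrC.
  by rewrite mul0r addr0 mulrC.
have h1 : `|I1 / mm - complex.Re c| <= e.
  rewrite /I1 /I2; apply: avg_bound; [exact: cyl_meas | exact: hm | exact: m0 | move=> x /H].
  by apply: le_trans; rewrite -ReB; exact: Re_le_cmod.
have h2 : `|I2 / mm - complex.Im c| <= e.
  rewrite /I1 /I2; apply: avg_bound; [exact: cyl_meas | exact: hm | exact: m0 | move=> x /H].
  by apply: le_trans; rewrite -ImB; exact: Im_le_cmod.
apply: le_trans (cmod_ReIm _) _.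
rewrite ReB ImB /=; lra.
Qed.

Lemma cyl_agree (x y : S) m : agree m x y -> cyl x m = cyl y m.
Proof.
move=> h; apply/seteqP; split => z hz j hj; rewrite hz //; last by rewrite h.
by rewrite h.
Qed.

Lemma Em_agree (g : S -> R[i]) m x y : agree m x y -> Em mu m g x = Em mu m g y.
Proof. by move=> h; rewrite /Em (cyl_agree _ _ _ h). Qed.

End SE.
Lemma powle {R : realType} (x y : R) k : 0 <= x -> x <= y -> x ^+ k <= y ^+ k.
Proof.
move=> x0 xy; apply: lerXn2r => //; rewrite nnegrE //; exact: le_trans xy.
Qed.

Section SF.
Context {R : realType} {N : nat} (theta : nat -> R).
Hypothesis theta_decr : forall m, (1 <= m)%N -> theta m.+1 <= theta m.
Hypothesis theta_ge0 : forall m, (1 <= m)%N -> 0 <= theta m.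

Lemma theta_mono i j : (1 <= i)%N -> (i <= j)%N -> theta j <= theta i.
Proof.
move=> i1 /subnK <-; elim: (j - i)%N => [|n IH]; rewrite ?add0n //.
rewrite addSn; apply: le_trans IH; apply: theta_decr.
exact: leq_trans i1 (leq_addl _ _).
Qed.

Definition TT := 1 + theta 1.

Lemma TT_ge k : (1 <= k)%N -> theta k <= TT.
Proof.
move=> k1; have h := @theta_mono 1 k (leqnn 1) k1; apply: le_trans h _.
by rewrite /TT lerDr.
Qed.

Lemma TT_ge0 : 0 <= TT.
Proof. by rewrite /TT addr_ge0 // theta_ge0. Qed.

Lemma th_shift k : theta k.+2 ^+ k.+1 <= TT * theta k.+1 ^+ k.
Proof.
have h0 : 0 <= theta k.+2 by exact: theta_ge0.
have h1 : 0 <= theta k.+1 by exact: theta_ge0.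
have h2 := @theta_decr k.+1 (ltn0Sn k).
have h3 := @powle _ _ _ k.+1 h0 h2; apply: le_trans h3 _.
rewrite exprS; apply: ler_wpM2r; first exact: exprn_ge0.
exact: TT_ge.
Qed.

Definition adm {A : 'M[nat]_N} (phi : Sigma A -> R[i]) (C : R) :=
  forall k x y, agree k x y -> cmod (phi x - phi y) <= C * theta k.+1 ^+ k.

Lemma TU_Bbound {A : 'M[nat]_N} (u phi : Sigma A -> R[i]) (U W P C : R) :
  0 <= U -> 0 <= W -> 0 <= P -> 0 <= C ->
  (forall x, cmod (u x) <= U) ->
  (forall k x y, agree k.+1 x y -> cmod (u x - u y) <= W * theta k.+1 ^+ k) ->
  (forall x, cmod (phi x) <= P) -> adm phi C ->
  Bbound theta (TU u phi) (N%:R * (U * P)) (N%:R * (W * P + U * (C * TT)) + 2 * (N%:R * (U * P))).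
Proof.
move=> U0 W0 P0 C0 hU hW hP hC.
have N0 : 0 <= N%:R :> R by [].
have sup := @TU_sup _ _ _ u phi U P U0 P0 hU hP.
split => // -[|k] x y hxy.
  rewrite expr0 mulr1; apply: le_trans (cmodD _ _) _; rewrite cmodN.
  have := sup x; have := sup y.
  have : 0 <= N%:R * (W * P + U * (C * TT)).
    by apply: mulr_ge0 => //; apply: addr_ge0; apply: mulr_ge0 => //; apply: mulr_ge0 => //; exact: TT_ge0.
  lra.
have thk : 0 <= theta k.+2 ^+ k.+1 by apply: exprn_ge0; exact: theta_ge0.
have hv := @TU_var _ _ _ u phi k.+1 U P (W * theta k.+2 ^+ k.+1) (C * (TT * theta k.+2 ^+ k.+1))
  (ltn0Sn _) U0 P0 (mulr_ge0 W0 thk) (mulr_ge0 C0 (mulr_ge0 TT_ge0 thk)) hU hP (hW k.+1).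
have hv2 : forall x y, agree k.+2 x y -> cmod (phi x - phi y) <= C * (TT * theta k.+2 ^+ k.+1).
  move=> x1 y1 h; apply: le_trans (hC _ _ _ h) _; apply: ler_wpM2l => //.
  exact: th_shift.
apply: le_trans (hv hv2 x y hxy) _.
have e : N%:R * (W * theta k.+2 ^+ k.+1 * P + U * (C * (TT * theta k.+2 ^+ k.+1))) =
  (N%:R * (W * P + U * (C * TT))) * theta k.+2 ^+ k.+1 by ring.
rewrite e; apply: ler_wpM2r => //.
rewrite lerDl; apply: mulr_ge0 => //; apply: mulr_ge0 => //; exact: mulr_ge0.
Qed.

End SF.
Section SG0.
Context {R : realType} {N : nat} {A : 'M[nat]_N} (theta : nat -> R) (w0 : Sigma A).

Lemma inB_bounds (phi : Sigma A -> R[i]) : inB theta phi ->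
  exists P C, 0 <= P /\ 0 <= C /\ (forall x, cmod (phi x) <= P) /\ adm theta phi C.
Proof.
move=> [_ [C [C0 hC]]].
have hadm : adm theta phi C by move=> k x y h; exact: var_pt (hC k) h.
exists (cmod (phi w0) + C), C; split; first by apply: addr_ge0 => //; exact: cmod_ge0.
split => //; split => // x.
have h0 := hadm 0%N x w0 (fun j (hj : (j < 0)%N) => False_ind _ (notF hj)).
rewrite expr0 mulr1 in h0.
have -> : phi x = (phi x - phi w0) + phi w0 by rewrite subrK.
apply: le_trans (cmodD _ _) _; lra.
Qed.

Lemma normB_phi (phi : Sigma A -> R[i]) : inB theta phi ->
  exists P I, normB theta phi = (P + I)%:E /\ 0 <= P /\ (forall x, cmod (phi x) <= P) /\
   (forall e, 0 < e -> exists C, 0 <= C /\ adm theta phi C /\ C <= I + e).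
Proof.
move=> hB; have [P0 [C0 [hP0 [hC0 [hb0 hadm0]]]]] := @inB_bounds phi hB.
move: hB => [_ [C1 [C10 hC1]]].
set SS := [set (cmod (phi x))%:E | x in [set: Sigma A]].
set II := EFin @` [set C : R | (0 <= C)%R /\
      forall k, (var k phi <= (C * theta k.+1 ^+ k)%:E)%E].
have shi : (ereal_sup SS <= P0%:E)%E by apply: ge_ereal_sup => _ [x _ <-]; rewrite lee_fin.
have slo : ((cmod (phi w0))%:E <= ereal_sup SS)%E by apply: ereal_sup_ubound; exists w0.
have ilo : ((0:R)%:E <= ereal_inf II)%E.
  by apply: le_ereal_inf_tmp => _ [C [hC _] <-]; rewrite lee_fin.
have ihi : (ereal_inf II <= C1%:E)%E.
  by apply: ereal_inf_lbound; exists C1.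
case Es : (ereal_sup SS) shi slo => [p| |] //= shi slo.
case Ei : (ereal_inf II) ilo ihi => [i| |] //= ilo ihi.
exists p, i; split; first by rewrite /normB -/SS -/II Es Ei.
split; first by apply: le_trans (cmod_ge0 (phi w0)) _; rewrite -lee_fin.
split.
  by move=> x; rewrite -lee_fin -Es; apply: ereal_sup_ubound; exists x.
move=> e e0.
have fin : ereal_inf II \is a fin_num by rewrite Ei.
have [_ [C [hC hCv] <-] hlt] := lb_ereal_inf_adherent e0 fin.
exists C; split => //; split.
  by move=> k x y h; exact: var_pt (hCv k) h.
by move: hlt; rewrite Ei -EFinD lte_fin => /ltW.
Qed.

End SG0.
Section SH.
Context {R : realType} {N : nat} (theta : nat -> R).
Hypothesis theta_decr : forall m, (1 <= m)%N -> theta m.+1 <= theta m.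
Hypothesis theta_ge0 : forall m, (1 <= m)%N -> 0 <= theta m.
Hypothesis theta_cvg0 : theta @ \oo --> (0 : R).
Context (b1 b2 : R) (b1_gt0 : 0 < b1) (b2_gt0 : 0 < b2).
Context {A : 'M[nat]_N} (w0 : Sigma A) (mu : probability (BorelSigma w0) R).
Hypothesis hmu : charges_open mu.
Context (m : nat) (hm1 : (1 <= m)%N) (hm : theta m <= 1).
Context (g : Sigma A -> R[i]) (hH : condH b1 b2 theta g).

Local Notation gm := (Em mu m g).

Lemma tmono {i j} : (1 <= i)%N -> (i <= j)%N -> theta j <= theta i.
Proof. exact: (@theta_mono R theta theta_decr i j). Qed.

Lemma TTge k : (1 <= k)%N -> theta k <= TT theta.
Proof. exact: (@TT_ge R theta theta_decr k). Qed.
Local Notation tm := (theta m).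

Definition BB := b1 * expR (2 * b2).

Lemma thm0 : 0 <= tm. Proof. exact: theta_ge0. Qed.

Lemma tmm : tm ^+ m <= tm. Proof. exact: ler_iXnr hm1 thm0 hm. Qed.

Lemma tmm0 : 0 <= tm ^+ m. Proof. exact: exprn_ge0 thm0. Qed.

Lemma G1 x : cmod (g x - gm x) <= 2 * (b2 * tm ^+ m).
Proof.
rewrite cmodB; apply: (@Em_bound _ _ _ w0 mu hmu) => y hy.
exact: var_pt (hH.2 m hm1) hy.
Qed.

Lemma G2 {x y} : agree m x y -> gm x = gm y.
Proof. exact: Em_agree. Qed.

Lemma G3 {k x y} : (1 <= k)%N -> agree k x y -> cmod (gm x - gm y) <= 5 * (b2 * theta k ^+ k).
Proof.
move=> k1 h.
have tk : 0 <= theta k ^+ k by apply: exprn_ge0; exact: theta_ge0.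
case: (leqP m k) => mk.
  rewrite (G2 (agree_mono mk h)) subrr cmod0.
  by apply: mulr_ge0 => //; apply: mulr_ge0 => //; exact: ltW.
have e1 : tm ^+ m <= theta k ^+ k.
  apply: le_trans (_ : tm ^+ k <= _).
    by apply: ler_wiXn2l => //; [exact: thm0 | exact: ltnW].
  apply: powle; first exact: thm0.
  exact: tmono (ltnW mk).
have hg : cmod (g x - g y) <= b2 * theta k ^+ k by exact: var_pt (hH.2 k k1) h.
have := G1 x; have := G1 y.
have -> : gm x - gm y = - (g x - gm x) + (g x - g y) + (g y - gm y) by ring.
move=> h1 h2.
apply: le_trans (cmodD _ _) _; apply: le_trans (lerD (cmodD _ _) (lexx _)) _.
rewrite cmodN.
have : b2 * tm ^+ m <= b2 * theta k ^+ k by apply: ler_wpM2l => //; exact: ltW.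
lra.
Qed.

Lemma BB_ge : b1 <= BB.
Proof.
rewrite /BB -[X in X <= _]mulr1; apply: ler_wpM2l; first exact: ltW.
by apply: le_trans (expR_ge1Dx _); rewrite lerDl; apply: mulr_ge0 => //; exact: ltW.
Qed.

Lemma BB_ge0 : 0 <= BB.
Proof. by apply: le_trans BB_ge; exact: ltW. Qed.

Lemma G4 x : expR (complex.Re (gm x)) <= BB.
Proof.
have h : complex.Re (gm x) <= complex.Re (g x) + 2 * b2.
  have h1 := Re_le_cmod (gm x - g x); rewrite ReB cmodB in h1.
  have h2 := G1 x.
  have : b2 * tm ^+ m <= b2 by rewrite -[X in _ <= X]mulr1; apply: ler_wpM2l; [exact: ltW|exact: le_trans tmm hm].
  move: h1; rewrite ler_norml => /andP[_ h1]; lra.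
apply: le_trans (_ : expR (complex.Re (g x) + 2 * b2) <= _).
  by rewrite ler_expR.
rewrite expRD /BB; apply: ler_wpM2r; first exact: expR_ge0.
exact: hH.1.
Qed.

Lemma Gg x : expR (complex.Re (g x)) <= BB.
Proof. by apply: le_trans BB_ge; exact: hH.1. Qed.

Lemma W1 k x y : agree k.+1 x y ->
  cmod (cexp (gm x) - cexp (gm y)) <= (30 * BB * b2 * TT theta) * theta k.+1 ^+ k.
Proof.
move=> h; apply: le_trans (cexp_lip (G4 x) (G4 y)) _.
have h3 := G3 (ltn0Sn k) h.
have tk : 0 <= theta k.+1 ^+ k by apply: exprn_ge0; exact: theta_ge0.
have t1 : theta k.+1 ^+ k.+1 <= TT theta * theta k.+1 ^+ k.
  by rewrite exprS; apply: ler_wpM2r => //; exact: TTge.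
have B0 := BB_ge0.
apply: le_trans (ler_wpM2l (mulr_ge0 (ler0n _ 6) B0) h3) _.
have : b2 * theta k.+1 ^+ k.+1 <= b2 * (TT theta * theta k.+1 ^+ k) by apply: ler_wpM2l => //; exact: ltW.
have : 0 <= BB * (b2 * theta k.+1 ^+ k.+1) by apply: mulr_ge0 => //; apply: mulr_ge0 => //; [exact: ltW|apply: exprn_ge0; exact: theta_ge0].
nra.
Qed.

Lemma U2 x : cmod (cexp (g x) - cexp (gm x)) <= 12 * BB * b2 * tm.
Proof.
apply: le_trans (cexp_lip (Gg x) (G4 x)) _.
have h := G1 x; have B0 := BB_ge0.
have : b2 * tm ^+ m <= b2 * tm by apply: ler_wpM2l; [exact: ltW| exact: tmm].
have := cmod_ge0 (g x - gm x).
nra.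
Qed.

Lemma W2 k x y : agree k.+1 x y ->
  cmod ((cexp (g x) - cexp (gm x)) - (cexp (g y) - cexp (gm y))) <=
  (24 * BB * b2 * tm) * theta k.+1 ^+ k.
Proof.
move=> h.
have B0 := BB_ge0.
have tk : 0 <= theta k.+1 ^+ k by apply: exprn_ge0; exact: theta_ge0.
have t0 := thm0.
case: (leqP m k.+1) => mk.
  rewrite (G2 (agree_mono mk h)).
  have -> : cexp (g x) - cexp (gm y) - (cexp (g y) - cexp (gm y)) = cexp (g x) - cexp (g y) by ring.
  apply: le_trans (cexp_lip (Gg x) (Gg y)) _.
  have hg := var_pt (hH.2 k.+1 (ltn0Sn k)) h.
  have t1 : theta k.+1 ^+ k.+1 <= tm * theta k.+1 ^+ k.
    by rewrite exprS; apply: ler_wpM2r => //; exact: tmono.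
  have : b2 * theta k.+1 ^+ k.+1 <= b2 * (tm * theta k.+1 ^+ k) by apply: ler_wpM2l => //; exact: ltW.
  have := cmod_ge0 (g x - g y).
  have : 0 <= BB * (tm * theta k.+1 ^+ k) by apply: mulr_ge0 => //; exact: mulr_ge0.
  have : 0 <= b2 * (BB * (tm * theta k.+1 ^+ k)) by apply: mulr_ge0 => //; [exact: ltW|apply: mulr_ge0 => //; exact: mulr_ge0].
  nra.
have e1 : tm ^+ m <= tm * theta k.+1 ^+ k.
  have -> : tm ^+ m = tm * tm ^+ m.-1 by rewrite -exprS prednK.
  apply: ler_wpM2l => //.
  apply: le_trans (_ : tm ^+ k <= _).
    by apply: ler_wiXn2l => //; rewrite -ltnS prednK //; exact: ltnW.
  apply: powle => //; apply: tmono => //; exact: ltnW.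
apply: le_trans (cmodD _ _) _; rewrite cmodN.
have h1 := G1 x; have h2 := G1 y.
have l1 := cexp_lip (Gg x) (G4 x); have l2 := cexp_lip (Gg y) (G4 y).
have : b2 * tm ^+ m <= b2 * (tm * theta k.+1 ^+ k) by apply: ler_wpM2l => //; exact: ltW.
have := cmod_ge0 (g x - gm x); have := cmod_ge0 (g y - gm y).
have : 6 * BB * cmod (g x - gm x) <= 6 * BB * (2 * (b2 * tm ^+ m)) by apply: ler_wpM2l => //; exact: mulr_ge0.
have : 6 * BB * cmod (g y - gm y) <= 6 * BB * (2 * (b2 * tm ^+ m)) by apply: ler_wpM2l => //; exact: mulr_ge0.
have : BB * (b2 * tm ^+ m) <= BB * (b2 * (tm * theta k.+1 ^+ k)) by apply: ler_wpM2l => //; apply: ler_wpM2l => //; exact: ltW.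
nra.
Qed.

Lemma TU_inB (u phi : Sigma A -> R[i]) (U W P C : R) :
  0 <= U -> 0 <= W -> 0 <= P -> 0 <= C ->
  (forall x, cmod (u x) <= U) ->
  (forall k x y, agree k.+1 x y -> cmod (u x - u y) <= W * theta k.+1 ^+ k) ->
  (forall x, cmod (phi x) <= P) -> adm theta phi C ->
  inB theta (TU u phi) /\
 (normB theta (TU u phi) <= (N%:R * (U * P) +
     (N%:R * (W * P + U * (C * TT theta)) + 2 * (N%:R * (U * P))))%R%:E)%E.
Proof.
move=> U0 W0 P0 C0 hU hW hP hC.
have hb := @TU_Bbound _ _ theta theta_decr theta_ge0 _ u phi U W P C U0 W0 P0 C0 hU hW hP hC.
have N0 : 0 <= N%:R :> R by [].
have T0 := @TT_ge0 R theta theta_ge0.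
have c0 : 0 <= N%:R * (W * P + U * (C * TT theta)) + 2 * (N%:R * (U * P)).
  have h1 : 0 <= W * P + U * (C * TT theta).
    by apply: addr_ge0; apply: mulr_ge0 => //; apply: mulr_ge0.
  have h2 : 0 <= U * P by apply: mulr_ge0.
  by apply: addr_ge0; apply: mulr_ge0 => //; apply: mulr_ge0.
split; first exact: (@Bbound_inB _ _ _ theta theta_ge0 theta_cvg0 _ _ _ c0 hb).
exact: (@normB_le _ _ _ theta _ _ _ c0 hb).
Qed.

Lemma final_part :
  (forall phi, inB theta phi -> inB theta (transfer gm phi)) /\
 (forall phi, inB theta phi ->
     inB theta (fun w => (transfer g phi w - transfer gm phi w)%R) /\
    (normB theta (fun w => (transfer g phi w - transfer gm phi w)%R)
        <= ((N%:R * BB * b2 * (60 + 12 * TT theta) + 1) * tm)%R%:E * normB theta phi)%E).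
Proof.
have B0 := BB_ge0.
have b20 : 0 <= b2 by exact: ltW.
have T0 := @TT_ge0 R theta theta_ge0.
have t0 := thm0.
split.
  move=> phi hB; have [P [C [P0 [C0 [hP hC]]]]] := @inB_bounds _ _ _ theta w0 phi hB.
  have -> : transfer gm phi = TU (fun x => cexp (gm x)) phi.
    by apply: funext => w; exact: transferE.
  have W0 : 0 <= 30 * BB * b2 * TT theta.
    by apply: mulr_ge0 => //; apply: mulr_ge0 => //; apply: mulr_ge0.
  have hU : forall x, cmod (cexp (gm x)) <= BB by move=> x; rewrite cmod_cexp; exact: G4.
  have hW : forall k x y, agree k.+1 x y ->
      cmod (cexp (gm x) - cexp (gm y)) <= (30 * BB * b2 * TT theta) * theta k.+1 ^+ k.
    by move=> k x y h; exact: W1.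
  by have [] := @TU_inB _ phi BB _ P C B0 W0 P0 C0 hU hW hP hC.
move=> phi hB.
have ediff : (fun w => transfer g phi w - transfer gm phi w) =
   TU (fun x => cexp (g x) - cexp (gm x)) phi.
  by apply: funext => w; rewrite !transferE TU_sub.
rewrite ediff.
have U0 : 0 <= 12 * BB * b2 * tm.
  by apply: mulr_ge0 => //; apply: mulr_ge0 => //; apply: mulr_ge0.
have W0 : 0 <= 24 * BB * b2 * tm.
  by apply: mulr_ge0 => //; apply: mulr_ge0 => //; apply: mulr_ge0.
have hU : forall x, cmod (cexp (g x) - cexp (gm x)) <= 12 * BB * b2 * tm by move=> x; exact: U2.
have hW : forall k x y, agree k.+1 x y ->
    cmod ((cexp (g x) - cexp (gm x)) - (cexp (g y) - cexp (gm y))) <= (24 * BB * b2 * tm) * theta k.+1 ^+ k.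
  by move=> k x y h; exact: W2.
have key : forall P C : R, 0 <= P -> 0 <= C -> (forall x, cmod (phi x) <= P) -> adm theta phi C ->
   inB theta (TU (fun x => cexp (g x) - cexp (gm x)) phi) /\
  (normB theta (TU (fun x => (cexp (g x) - cexp (gm x))%R) phi) <=
     ((N%:R * BB * b2 * (60 + 12 * TT theta) + 1) * tm * (P + C))%R%:E)%E.
  move=> P C P0 C0 hP hC.
  have [h1 h2] := @TU_inB _ phi _ _ P C U0 W0 P0 C0 hU hW hP hC.
  split => //; apply: le_trans h2 _; rewrite lee_fin.
  set K := N%:R * BB * b2.
  have K0 : 0 <= K by apply: mulr_ge0 => //; apply: mulr_ge0.
  rewrite -subr_ge0.
  have -> : (K * (60 + 12 * TT theta) + 1) * tm * (P + C) -
    (N%:R * (12 * BB * b2 * tm * P) + (N%:R * (24 * BB * b2 * tm * P +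
       12 * BB * b2 * tm * (C * TT theta)) + 2 * (N%:R * (12 * BB * b2 * tm * P)))) =
    tm * (K * 60 * C + K * 12 * TT theta * P + P + C) by rewrite /K; ring.
  apply: mulr_ge0 => //; repeat apply: addr_ge0 => //; repeat apply: mulr_ge0 => //.
have [P [C [P0 [C0 [hP hC]]]]] := @inB_bounds _ _ _ theta w0 phi hB.
split; first by have [] := key P C P0 C0 hP hC.
have [P1 [I [eN [P10 [hP1 he]]]]] := @normB_phi _ _ _ theta w0 phi hB.
rewrite eN; apply/lee_addgt0Pr => e e0.
set a := (N%:R * BB * b2 * (60 + 12 * TT theta) + 1) * tm.
have a0 : 0 <= a.
  apply: mulr_ge0 => //; apply: addr_ge0 => //; apply: mulr_ge0 => //.
    by apply: mulr_ge0 => //; apply: mulr_ge0.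
  by apply: addr_ge0 => //; apply: mulr_ge0.
have a10 : 0 < a + 1 by apply: lt_le_trans (ltr01) _; rewrite lerDr.
have e'0 : 0 < e / (a + 1) by apply: divr_gt0.
have [C2 [C20 [hC2 hCI]]] := he _ e'0.
have [_ hk] := key P1 C2 P10 C20 hP1 hC2.
apply: le_trans hk _; rewrite -EFinM -EFinD lee_fin.
have ee : e / (a + 1) * (a + 1) = e by rewrite divfK // gt_eqF.
have : a * C2 <= a * (I + e / (a + 1)) by apply: ler_wpM2l.
have : 0 <= e / (a + 1) := ltW e'0.
rewrite -/a.
move: ee; set e' := e / (a + 1); clearbody a e' => ee h1 h2.
rewrite -ee; lra.
Qed.

End SH.
Local Close Scope complex_scope.

Theorem lemma3p7 (R : realType) (N : nat) (theta : nat -> R)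
  (theta_decr : forall m, (1 <= m)%N -> theta m.+1 <= theta m)
  (theta_ge0 : forall m, (1 <= m)%N -> 0 <= theta m)
  (theta_cvg0 : theta @ \oo --> (0 : R))
  (b1 b2 : R) (b1_gt0 : 0 < b1) (b2_gt0 : 0 < b2) :
  exists C3 : R, 0 < C3 /\
  forall (A : 'M[nat]_N), zero_one A -> aperiodic A ->
  forall (w0 : Sigma A) (mu : probability (BorelSigma w0) R),
  charges_open mu ->
  forall m : nat, (1 <= m)%N -> theta m <= 1 ->
  forall g : Sigma A -> R[i], inV g -> condH b1 b2 theta g ->
  let gm := Em mu m g in
  (forall phi, inB theta phi -> inB theta (transfer gm phi)) /\
  (forall phi, inB theta phi ->
     inB theta (fun w => (transfer g phi w - transfer gm phi w)%R) /\
     (normB theta (fun w => (transfer g phi w - transfer gm phi w)%R)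
        <= (C3 * theta m)%:E * normB theta phi)%E).
Proof.
exists (N%:R * BB b1 b2 * b2 * (60 + 12 * TT theta) + 1).
split.
  apply: lt_le_trans ltr01 _; rewrite lerDr.
  have B0 : 0 <= BB b1 b2.
    by rewrite /BB; apply: mulr_ge0; [exact: ltW | exact: expR_ge0].
  have T0 := @TT_ge0 R theta theta_ge0.
  apply: mulr_ge0; last by apply: addr_ge0 => //; apply: mulr_ge0.
  by apply: mulr_ge0; [apply: mulr_ge0 | exact: ltW].
move=> A _ _ w0 mu hmu m hm1 hm g _ hH gm.
exact: (@final_part R N theta theta_decr theta_ge0 theta_cvg0 b1 b2 b1_gt0 b2_gt0 A w0 mu hmu m hm1 hm g hH).
Qed.
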